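(* Let $P_\sigma:=\{(S_1,S_2)\in\mathbb{R}^2:S_1+S_2\le1\}$, $I:=1-S_1-S_2$, $\mathcal{P}:=\{(X,I):I\ge0\}$, $\mathcal{B}:=\{(\beta_1,\beta_2)\in\mathbb{R}^2:\beta_1>\beta_2\}$ and $G_\sigma:=\{g\in GL_2(\mathbb{R}):\det g>0,\ g_{11}+g_{21}=g_{12}+g_{22}=1\}$. For $\beta\in\mathcal{B}$ let $\varphi_\beta(S)=(\beta_1S_1+\beta_2S_2,1-S_1-S_2)$. An SSISS vector field with transmission pair $\beta\in\mathcal{B}$ is a vector field on $P_\sigma$ of the form $$F(S)=\big(-\beta_1S_1I-\Omega_1(S)S_1+\Omega_2(S)S_2+\gamma_1I,\ -\beta_2S_2I+\Omega_1(S)S_1-\Omega_2(S)S_2+\gamma_2I\big)$$ with $\Omega_1,\Omega_2\in C^\infty(P_\sigma)$ and $\gamma_1+\gamma_2=1$ (the pair $\beta$ is determined by $F$). Then: (i) If $F$ is an SSISS vector field with pair $\beta$ and $(\varphi_\beta)_*F=f\partial_X+(X-1)I\partial_I$ for some $f\in C^\infty(\mathcal{P})$, then for every $g\in G_\sigma$ the vector field $g_*F$ is an SSISS vector field with pair $\beta g^{-1}$ and $(\varphi_{\beta g^{-1}})_*(g_*F)=f\partial_X+(X-1)I\partial_I$. (ii) If $F$, $F'$ are SSISS vector fields with pairs $\beta,\beta'$ respectively and $(\varphi_\beta)_*F=(\varphi_{\beta'})_*F'=f\partial_X+(X-1)I\partial_I$ for the same $f$, then there exists a unique $g\in G_\sigma$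 with $\beta'=\beta g^{-1}$ and $F'=g_*F$.
   Context: Here $g\in G_\sigma$ acts linearly on column vectors $S=(S_1,S_2)^T$ (and preserves $P_\sigma$), $\beta$ is a row vector, and $g_*F:=g\circ F\circ g^{-1}$ is the push-forward; similarly $(\varphi_\beta)_*F=D\varphi_\beta\circ F\circ\varphi_\beta^{-1}$. *)

(* Defs.v *)
From HB Require Import structures.
From mathcomp Require Import all_boot all_order all_algebra.
From mathcomp Require Import all_classical all_reals all_analysis.
Set Implicit Arguments. Unset Strict Implicit. Unset Printing Implicit Defensive.
Import Order.TTheory GRing.Theory Num.Theory.
Import numFieldNormedType.Exports.
Local Open Scope classical_set_scope.
Local Open Scope ring_scope.

Section SSISS.
Context {R : realType}.

(* Points of R^2 are column vectors S = (S_1, S_2)^T : 'cV[R]_2,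
   entry S_1 = S 0 0, S_2 = S 1 0 (0-based ordinals). *)
Notation V := 'cV[R]_2.

Definition cv2 (a b : R) : V := \col_(i < 2) (if i == 0 then a else b).

Fixpoint iterD (vs : seq V) (h : V -> R) : V -> R :=
  if vs is v :: vs' then (fun x => 'D_v (iterD vs' h) x) else h.

Definition smooth (h : V -> R) : Prop :=
  forall (vs : seq V) (x : V), differentiable (iterD vs h) x.

Definition smooth_on (D : set V) (h : V -> R) : Prop :=
  exists h' : V -> R, smooth h' /\ (forall x, D x -> h x = h' x).

Definition Psigma : set V := [set S | S 0 0 + S 1 0 <= 1].
Definition Ivar (S : V) : R := 1 - S 0 0 - S 1 0.
(* calP = {(X, I) : I >= 0}, coordinates Y = (X, I)^T *)
Definition calP : set V := [set Y | 0 <= Y 1 0].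
Definition calB : set 'rV[R]_2 := [set b | b 0 1 < b 0 0].
Definition Gsigma : set 'M[R]_2 :=
  [set g | 0 < \det g /\ g 0 0 + g 1 0 = 1 /\ g 0 1 + g 1 1 = 1].

Definition pushforward (phi phiinv : V -> V) (Dphi : V -> 'M[R]_2)
  (F : V -> V) : V -> V :=
  fun y => Dphi (phiinv y) *m F (phiinv y).

Definition push_g (g : 'M[R]_2) (F : V -> V) : V -> V :=
  pushforward (fun S => g *m S) (fun S => invmx g *m S) (fun _ => g) F.

(* phi_beta(S) = (beta_1 S_1 + beta_2 S_2, 1 - S_1 - S_2) = A_beta S + (0,1) *)
Definition Abeta (b : 'rV[R]_2) : 'M[R]_2 :=
  \matrix_(i < 2, j < 2) (if i == 0 then b 0 j else -1).
Definition phi (b : 'rV[R]_2) (S : V) : V :=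
  cv2 (b 0 0 * S 0 0 + b 0 1 * S 1 0) (1 - S 0 0 - S 1 0).
Definition phi_inv (b : 'rV[R]_2) (Y : V) : V :=
  invmx (Abeta b) *m (Y - cv2 0 1).
Definition push_phi (b : 'rV[R]_2) (F : V -> V) : V -> V :=
  pushforward (phi b) (phi_inv b) (fun _ => Abeta b) F.

Definition model_field (f : V -> R) : V -> V :=
  fun Y => cv2 (f Y) ((Y 0 0 - 1) * Y 1 0).

Definition SSISS (b : 'rV[R]_2) (F : V -> V) : Prop :=
  calB b /\
  exists (Om1 Om2 : V -> R) (g1 g2 : R),
    smooth_on Psigma Om1 /\ smooth_on Psigma Om2 /\ g1 + g2 = 1 /\
    forall S, Psigma S ->
      F S = cv2 (- b 0 0 * S 0 0 * Ivar S - Om1 S * S 0 0 + Om2 S * S 1 0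
                   + g1 * Ivar S)
                (- b 0 1 * S 1 0 * Ivar S + Om1 S * S 0 0 - Om2 S * S 1 0
                   + g2 * Ivar S).

End SSISS.

(* Main.v *)
From Pilot Require Import Defs.
From HB Require Import structures.
From mathcomp Require Import all_boot all_order all_algebra.
From mathcomp Require Import all_classical all_reals all_analysis.
From mathcomp Require Import ring lra.
Import Order.TTheory GRing.Theory Num.Theory.
Import numFieldNormedType.Exports.
Local Open Scope classical_set_scope.
Local Open Scope ring_scope.

Lemma ord2P (j : 'I_2) : j = 0 \/ j = 1.
Proof.
case: j => [[|[|k]]] hk; [left|right|by []]; exact: val_inj.
Qed.

Section S.
Context {R : realType}.
Notation V := 'cV[R]_2.
Local Notation iterD := Pilot.Defs.iterD.

Lemma sum2 (F : 'I_2 -> R) : \sum_(i < 2) F i = F 0 + F 1.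
Proof. by rewrite big_ord_recl big_ord1; congr (F _ + F _); apply: val_inj. Qed.

Lemma det22 (A : 'M[R]_2) : \det A = A 0 0 * A 1 1 - A 0 1 * A 1 0.
Proof.
rewrite (expand_det_row _ 0) !sum2 /cofactor !det_mx11 !mxE /=.
have -> : lift (0 : 'I_2) (0 : 'I_1) = 1 by apply: val_inj.
have -> : lift (1 : 'I_2) (0 : 'I_1) = 0 by apply: val_inj.
rewrite expr0 expr1 !mul1r. ring.
Qed.

Lemma D_lin (f : V -> R) (v x : V) :
  (forall (h : R) (u y : V), f (h *: u + y) = h * f u + f y) ->
  'D_v f x = f v.
Proof.
move=> hf; rewrite /derive; apply: lim_near_cst => //.
near=> h.
have h0 : h != 0 by near: h; exact: nbhs_dnbhs_neq.
rewrite /= hf addrK /GRing.scale /= mulrA mulVf // mul1r.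
Unshelve. all: by end_near.
Qed.

Lemma D_comp (M : 'M[R]_2) (k : V -> R) (v x : V) :
  'D_v (k \o mulmx M) x = 'D_(M *m v) k (M *m x).
Proof.
rewrite /derive /=.
rewrite (_ : (fun h : R => _) = (fun h : R => h^-1 *: (k (h *: (M *m v) + M *m x) - k (M *m x)))) //.
by apply: funext => h /=; rewrite mulmxDr scalemxAr.
Qed.


Lemma smoothD (f g : V -> R) : smooth f -> smooth g -> smooth (f + g)%R.
Proof.
move=> sf sg.
have E : forall vs : seq V, iterD vs (f + g)%R = (iterD vs f + iterD vs g)%R.
  elim=> [|v vs IH] //=; apply: funext => x.
  by rewrite IH deriveD //; exact: diff_derivable.
by move=> vs x; rewrite E; exact: differentiableD.
Qed.

Lemma smoothZ (k : R) (f : V -> R) : smooth f -> smooth (fun x => k * f x).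
Proof.
move=> sf; have -> : (fun x => k * f x) = k \*: f by [].
have E : forall vs : seq V, iterD vs (k \*: f) = k \*: iterD vs f.
  elim=> [|v vs IH] //=; apply: funext => x.
  by rewrite IH deriveZ //; exact: diff_derivable.
by move=> vs x; rewrite E; exact: differentiableZ.
Qed.

Lemma smooth_cst (c : R) : smooth (cst c).
Proof.
have E : forall vs : seq V, iterD vs (cst c) = cst (if vs is [::] then c else 0).
  elim=> [|v vs IH] //=; apply: funext => x.
  by rewrite IH derive_cst.
by move=> vs x; rewrite E; exact: differentiable_cst.
Qed.

Lemma smooth_coord (i : 'I_2) : smooth (fun x : V => x i 0).
Proof.
have hl : forall (h : R) (u y : V), (h *: u + y) i 0 = h * u i 0 + y i 0.
  by move=> h u y; rewrite !mxE.
have E : forall vs : seq V, iterD vs (fun x : V => x i 0) = (fun x : V => x i 0) \/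
          exists c, iterD vs (fun x : V => x i 0) = cst c.
  elim=> [|v vs IH] /=; first by left.
  right; case: IH => [->|[c ->]].
    by exists (v i 0); apply: funext => x; rewrite D_lin.
  by exists 0; apply: funext => x; rewrite derive_cst.
move=> vs x; case: (E vs) => [->|[c ->]]; last exact: differentiable_cst.
exact: differentiable_coord.
Qed.

Lemma mulmx_diff (M : 'M[R]_2) (x : V) : differentiable (mulmx M) x.
Proof.
have -> : mulmx M = (fun y : V => y 0 0 *: col 0 M) + (fun y : V => y 1 0 *: col 1 M).
  apply: funext => y; apply/matrixP => i j.
  by rewrite !mxE sum2 (ord1 j); ring.
have h1 := @differentiableD R V V (fun y : V => y 0 0 *: col 0 M) (fun y : V => y 1 0 *: col 1 M) x.
apply: h1; apply: differentiableZl; exact: differentiable_coord.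
Qed.

Lemma smooth_comp (M : 'M[R]_2) (f : V -> R) : smooth f -> smooth (f \o mulmx M).
Proof.
move=> sf.
have E : forall vs : seq V, iterD vs (f \o mulmx M) = iterD (map (mulmx M) vs) f \o mulmx M.
  elim=> [|v vs IH] //=; apply: funext => x.
  by rewrite IH D_comp.
move=> vs x; rewrite E; apply: differentiable_comp; first exact: mulmx_diff.
exact: sf.
Qed.




Lemma Gsig_unit {g : 'M[R]_2} : Gsigma g -> g \in unitmx.
Proof. by move=> [dg _]; rewrite unitmxE unitfE gt_eqF. Qed.

Lemma Gsig_hc {g : 'M[R]_2} : Gsigma g -> forall j, invmx g 0 j + invmx g 1 j = 1.
Proof.
move=> Gg j; have E := mulmxV (Gsig_unit Gg).
have e0 : (g *m invmx g) 0 j = (1%:M : 'M[R]_2) 0 j by rewrite E.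
have e1 : (g *m invmx g) 1 j = (1%:M : 'M[R]_2) 1 j by rewrite E.
move: Gg => [_ [c0 c1]].
move: e0 e1; rewrite /= !mxE !sum2.
have -> : g 1 0 = 1 - g 0 0 by rewrite -c0; ring.
have -> : g 1 1 = 1 - g 0 1 by rewrite -c1; ring.
case: (ord2P j) => -> /= e0 e1; nra.
Qed.

Lemma Gsig_inv {g : 'M[R]_2} : Gsigma g -> Gsigma (invmx g).
Proof.
move=> Gg; have gu := Gsig_unit Gg; have hc := Gsig_hc Gg.
move: Gg => [dg _]; split; first by rewrite det_inv invr_gt0.
by split; apply: hc.
Qed.

Lemma Gsig_calB (g : 'M[R]_2) (b : 'rV[R]_2) : Gsigma g -> calB b -> calB (b *m g).
Proof.
move=> [dg [c0 c1]] Bb; rewrite /calB /= in Bb *; rewrite !mxE !sum2.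
move: dg; rewrite det22.
have -> : g 1 0 = 1 - g 0 0 by rewrite -c0; ring.
have -> : g 1 1 = 1 - g 0 1 by rewrite -c1; ring.
move=> dg; have : 0 < b 0 0 - b 0 1 by rewrite subr_gt0.
move=> /mulr_gt0 /(_ dg).
nra.
Qed.


Lemma Psig_inv (g : 'M[R]_2) (S : V) : Gsigma g -> Psigma S -> Psigma (invmx g *m S).
Proof.
move=> Gg PS; have hc := Gsig_hc Gg; move: PS; rewrite /Psigma /= !mxE !sum2.
have -> : invmx g 1 0 = 1 - invmx g 0 0 by rewrite -(hc 0); ring.
have -> : invmx g 1 1 = 1 - invmx g 0 1 by rewrite -(hc 1); ring.
move=> PS; nra.
Qed.

Lemma part_i_ssiss (b : 'rV[R]_2) (F : V -> V) (g : 'M[R]_2) :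
  SSISS b F -> Gsigma g -> SSISS (b *m invmx g) (push_g g F).
Proof.
move=> [Bb [Om1 [Om2 [g1 [g2 [sm1 [sm2 [hg12 hF]]]]]]]] Gg.
case: sm1 => O1e [sO1 eO1]; case: sm2 => O2e [sO2 eO2].
have hc := Gsig_hc Gg.
split; first exact: Gsig_calB (Gsig_inv Gg) Bb.
set h := invmx g.
pose d := g 0 0 - g 0 1.
pose c1 := g 0 0 * b 0 0 * h 0 0 + g 0 1 * b 0 1 * h 1 0 - (b 0 0 * h 0 0 + b 0 1 * h 1 0).
pose c2 := g 0 0 * b 0 0 * h 0 1 + g 0 1 * b 0 1 * h 1 1.
pose Iv : V -> R := (cst 1 + (fun x : V => (-1) * x 0 0) + (fun x : V => (-1) * x 1 0))%R.
have sIv : smooth Iv.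
  apply: smoothD; first apply: smoothD.
  - exact: smooth_cst.
  - exact (smoothZ (-1) _ (smooth_coord 0)).
  - exact (smoothZ (-1) _ (smooth_coord 1)).
have IvE : forall x, Iv x = Ivar x.
  by move=> x; rewrite /Iv /Ivar !addrfctE /=; ring.
pose W1 : V -> R := ((fun x => (d * h 0 0) * (O1e \o mulmx h) x)
   + (fun x => (- (d * h 1 0)) * (O2e \o mulmx h) x) + (fun x => c1 * Iv x))%R.
pose W2 : V -> R := ((fun x => (- (d * h 0 1)) * (O1e \o mulmx h) x)
   + (fun x => (d * h 1 1) * (O2e \o mulmx h) x) + (fun x => (- c2) * Iv x))%R.
have sW1 : smooth W1.
  apply: smoothD; first apply: smoothD.
  - exact: (smoothZ _ _ (smooth_comp h _ sO1)).
  - exact: (smoothZ _ _ (smooth_comp h _ sO2)).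
  - exact: (smoothZ _ _ sIv).
have sW2 : smooth W2.
  apply: smoothD; first apply: smoothD.
  - exact: (smoothZ _ _ (smooth_comp h _ sO1)).
  - exact: (smoothZ _ _ (smooth_comp h _ sO2)).
  - exact: (smoothZ _ _ sIv).
exists W1, W2, (g 0 0 * g1 + g 0 1 * g2), (g 1 0 * g1 + g 1 1 * g2).
split; first by exists W1.
split; first by exists W2.
have [_ [gc0 gc1]] := Gg.
split.
  have -> : g 1 0 = 1 - g 0 0 by rewrite -gc0; ring.
  have -> : g 1 1 = 1 - g 0 1 by rewrite -gc1; ring.
  have -> : g2 = 1 - g1 by rewrite -hg12; ring.
  ring.
move=> S PS.
rewrite /push_g /Defs.pushforward /= -/h hF; last exact: Psig_inv _ _ Gg PS.
rewrite eO1; last exact: Psig_inv _ _ Gg PS.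
rewrite eO2; last exact: Psig_inv _ _ Gg PS.
rewrite /W1 /W2 !addrfctE /= !IvE.
set o1 := O1e (h *m S); set o2 := O2e (h *m S).
apply/matrixP => i j; rewrite (ord1 j).
rewrite /Ivar.
have e10 : h 1 0 = 1 - h 0 0 by rewrite -(hc 0); ring.
have e11 : h 1 1 = 1 - h 0 1 by rewrite -(hc 1); ring.
have f10 : g 1 0 = 1 - g 0 0 by rewrite -gc0; ring.
have f11 : g 1 1 = 1 - g 0 1 by rewrite -gc1; ring.
have k2 : g2 = 1 - g1 by rewrite -hg12; ring.
rewrite /d /c1 /c2.
case: (ord2P i) => ->; rewrite !mxE !sum2 !mxE /= e10 e11 ?f10 ?f11 k2; ring.
Qed.


Lemma Abeta_unit {b : 'rV[R]_2} : calB b -> Abeta b \in unitmx.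
Proof.
rewrite /calB /= => Bb; rewrite unitmxE unitfE det22 !mxE /=.
apply/eqP => E; move: Bb; have : b 0 1 = b 0 0 by move: E; lra.
by move=> ->; rewrite ltxx.
Qed.

Lemma Abeta_mul (b : 'rV[R]_2) (G : 'M[R]_2) : Gsigma G ->
  Abeta b *m invmx G = Abeta (b *m invmx G).
Proof.
move=> GG; have hc := Gsig_hc GG.
apply/matrixP => i j; case: (ord2P i) => ->; rewrite !mxE !sum2 !mxE //=.
move: (hc j); lra.
Qed.

Lemma invmxM' (A B : 'M[R]_2) : A \in unitmx -> B \in unitmx ->
  invmx (A *m B) = invmx B *m invmx A.
Proof.
move=> uA uB; have uAB : A *m B \in unitmx by rewrite unitmx_mul uA.
have E : (A *m B) *m (invmx B *m invmx A) = 1%:M.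
  by rewrite mulmxA -(mulmxA A) mulmxV // mulmx1 mulmxV.
by rewrite -[RHS](mulKmx uAB) E mulmx1.
Qed.

Lemma part_i_phi (b : 'rV[R]_2) (F : V -> V) (g : 'M[R]_2) (f : V -> R) :
  calB b -> Gsigma g -> (forall Y, calP Y -> push_phi b F Y = model_field f Y) ->
  forall Y, calP Y -> push_phi (b *m invmx g) (push_g g F) Y = model_field f Y.
Proof.
move=> Bb Gg hY Y PY; rewrite -hY //.
have gu := Gsig_unit Gg; have Au := Abeta_unit Bb.
rewrite /push_phi /push_g /Defs.pushforward /phi_inv /=.
rewrite -(Abeta_mul b g Gg) invmxM' // ?unitmx_inv // invmxK.
rewrite !mulmxA mulVmx // mul1mx -(mulmxA (Abeta b)) mulVmx // mulmx1.
by [].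
Qed.


Lemma phiE (b : 'rV[R]_2) (S : V) : Defs.phi b S = Abeta b *m S + cv2 0 1.
Proof.
apply/matrixP => i j; rewrite (ord1 j); case: (ord2P i) => ->;
  rewrite !mxE !sum2 !mxE /=; ring.
Qed.

Lemma phi_invK (b : 'rV[R]_2) (S : V) : calB b -> phi_inv b (Defs.phi b S) = S.
Proof.
move=> Bb; rewrite /phi_inv phiE addrK mulKmx //; exact: Abeta_unit.
Qed.

Lemma calP_phi (b : 'rV[R]_2) (S : V) : Psigma S -> calP (Defs.phi b S).
Proof. rewrite /Psigma /calP /= !mxE /= => PS; lra. Qed.

Lemma Abeta_inj (b b' : 'rV[R]_2) : Abeta b = Abeta b' -> b = b'.
Proof.
move=> E; apply/matrixP => i j; rewrite (ord1 i).
have := congr1 (fun M : 'M[R]_2 => M 0 j) E; rewrite !mxE /=.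
by [].
Qed.

Lemma part_ii (b b' : 'rV[R]_2) (F F' : V -> V) (f : V -> R) :
  calB b -> calB b' ->
  (forall Y, calP Y -> push_phi b F Y = model_field f Y) ->
  (forall Y, calP Y -> push_phi b' F' Y = model_field f Y) ->
  exists g : 'M[R]_2,
       (Gsigma g /\ b' = b *m invmx g /\
        (forall S, Psigma S -> F' S = push_g g F S)) /\
       (forall g' : 'M[R]_2,
          Gsigma g' /\ b' = b *m invmx g' /\
          (forall S, Psigma S -> F' S = push_g g' F S) -> g' = g).
Proof.
move=> Bb Bb' hY hY'.
have Au := Abeta_unit Bb; have Au' := Abeta_unit Bb'.
pose g := invmx (Abeta b') *m Abeta b.
have Gg : Gsigma g.
  have E : Abeta b' *m g = Abeta b by rewrite /g mulKVmx.
  split.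
    rewrite /g det_mulmx det_inv !det22 !mxE /=.
    move: Bb Bb'; rewrite /calB /= => Bb Bb'.
    rewrite -mulrNN -invrN; apply: mulr_gt0; first rewrite invr_gt0; lra.
  split.
    have := congr1 (fun M : 'M[R]_2 => M 1 0) E; rewrite !(mxE, sum2) /=; lra.
  have := congr1 (fun M : 'M[R]_2 => M 1 1) E; rewrite !(mxE, sum2) /=; lra.
have ginv : invmx g = invmx (Abeta b) *m Abeta b'.
  by rewrite /g invmxM' ?unitmx_inv // invmxK.
have key : forall g' : 'M[R]_2, Gsigma g' -> b' = b *m invmx g' -> g' = g.
  move=> g' Gg' eb.
  have E : Abeta b *m invmx g' = Abeta b' by rewrite Abeta_mul // -eb.
  have E2 : invmx g' = invmx (Abeta b) *m Abeta b' by rewrite -E mulKmx.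
  by rewrite -[g']invmxK E2 -ginv invmxK.
exists g; split; last by move=> g' [Gg' [eb _]]; exact: key.
split; first exact: Gg.
split.
  apply: Abeta_inj; rewrite -Abeta_mul // ginv mulmxA mulmxV // mul1mx //.
move=> S PS.
have h1 := hY' _ (calP_phi b' S PS); have h2 := hY _ (calP_phi b' S PS).
rewrite -h2 /push_phi /Defs.pushforward phi_invK // in h1.
rewrite /phi_inv phiE addrK mulmxA -ginv in h1.
rewrite /push_g /Defs.pushforward /= /g -mulmxA -h1 mulKmx //.
Qed.

End S.

Theorem corollary3p10 (R : realType) :
  (* (i) *)
  (forall (b : 'rV[R]_2) (F : 'cV[R]_2 -> 'cV[R]_2) (f : 'cV[R]_2 -> R),
     SSISS b F -> smooth_on calP f ->
     (forall Y, calP Y -> push_phi b F Y = model_field f Y) ->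
     forall g : 'M[R]_2, Gsigma g ->
       SSISS (b *m invmx g) (push_g g F) /\
       (forall Y, calP Y ->
          push_phi (b *m invmx g) (push_g g F) Y = model_field f Y)) /\
  (* (ii) *)
  (forall (b b' : 'rV[R]_2) (F F' : 'cV[R]_2 -> 'cV[R]_2) (f : 'cV[R]_2 -> R),
     SSISS b F -> SSISS b' F' -> smooth_on calP f ->
     (forall Y, calP Y -> push_phi b F Y = model_field f Y) ->
     (forall Y, calP Y -> push_phi b' F' Y = model_field f Y) ->
     exists g : 'M[R]_2,
       (Gsigma g /\ b' = b *m invmx g /\
        (forall S, Psigma S -> F' S = push_g g F S)) /\
       (forall g' : 'M[R]_2,
          Gsigma g' /\ b' = b *m invmx g' /\
          (forall S, Psigma S -> F' S = push_g g' F S) -> g' = g)).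
Proof.
split.
- move=> b F f hS _ hY g Gg; split; first exact: part_i_ssiss.
  apply: part_i_phi => //; exact: hS.1.
- move=> b b' F F' f hS hS' _ hY hY'.
  exact: part_ii hS.1 hS'.1 hY hY'.
Qed.
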